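(* Assume the setting described in the context. Let $\lambda\in\mathbb{R}^F$ satisfy $$\lambda_f\ge\sum_{\sigma\in f:\,\sigma'\in A(f,\sigma)}\rho(\sigma'\mid f,\sigma)\frac{\omega(\sigma)}{\omega(\sigma')}\quad\text{for all }f\in F,\ \sigma'\in\Omega.$$ Let $W$ be a word and $\mathcal{X}$ a valid set of walks such that $W$ is a prefix of the word of every walk in $\mathcal{X}$. Then $$\sum_{\tau\in\mathcal{X}}p(\tau)\le\gamma^{\mathrm{init}}\cdot\lambda_W.$$
   Context: Setting: $\Omega$ is a finite set and $F$ a finite set of flaws, each a nonempty subset of $\Omega$; $F_\sigma=\{f:\sigma\in f\}$. For $\sigma\in\Omega$ and $f\in F_\sigma$ there is a probability distribution $\rho(\cdot\mid f,\sigma)$ on $\Omega$ with support $A(f,\sigma)$. $\omega$ is a probability distribution on $\Omega$ with $\omega(\sigma)>0$ for all $\sigma$, and $\omega^{\mathrm{init}}$ is a probability distribution on $\Omega$. Set $\gamma^{\mathrm{init}}=\max_\sigma\omega^{\mathrm{init}}(\sigma)/\omega(\sigma)$. A walk is a sequence $\tau=\sigma_1\xrightarrow{w_1}\sigma_2\cdots\xrightarrow{w_t}\sigma_{t+1}$ with $w_i\in F_{\sigma_i}$ and $\sigma_{i+1}\in A(w_i,\sigma_i)$. Its word is $w_1\ldots w_t$, and $$p(\tau)=\omega^{\mathrm{init}}(\sigma_1)\prod_{i=1}^t\rho(\sigma_{i+1}\mid w_i,\sigma_i).$$ A word is a finite sequence of flaws; for $W=w_1\ldots w_k$, $\lambda_W=\prod_i\lambda_{w_i}$.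 A word $W$ is a prefix of a word $U$ if $U=WU'$ for some word $U'$. A deterministic strategy assigns to each walk whose last state $\sigma$ is flawed a flaw in $F_\sigma$; a walk follows it if each $w_i$ is the flaw assigned to the prefix ending at $\sigma_i$. A set of walks is valid if all its walks follow one common deterministic strategy and no walk in it is a proper prefix of another (i.e., a walk $\tau$ is never an initial segment, different from $\tau'$, of some $\tau'$ in the set). *)

(* Defs.v *)
From HB Require Import structures.
From mathcomp Require Import all_boot all_order all_algebra.
Set Implicit Arguments. Unset Strict Implicit. Unset Printing Implicit Defensive.
Import Order.TTheory GRing.Theory Num.Theory.
Local Open Scope ring_scope.

(* Flaws are subsets of Omega; the flaw family is F : {set {set Omega}}.
   rho f s s' stands for rho(s' | f, s); A(f,s) is its support
   [set s' | 0 < rho f s s'].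
   A walk  s_1 -w_1-> s_2 ... -w_t-> s_{t+1}  is encoded as
   (s_1, [:: (w_1, s_2); ...; (w_t, s_{t+1})]). *)
Definition walk (Omega : finType) := (Omega * seq ({set Omega} * Omega))%type.

(* s_{i+1} (0-indexed: state t 0 = s_1) *)
Definition state (Omega : finType) (t : walk Omega) (i : nat) : Omega :=
  nth t.1 (t.1 :: map snd t.2) i.
(* the (i+1)-th step (w_{i+1}, s_{i+2}) *)
Definition step (Omega : finType) (t : walk Omega) (i : nat) : {set Omega} * Omega :=
  nth (set0, t.1) t.2 i.
Definition wlast (Omega : finType) (t : walk Omega) : Omega :=
  last t.1 (map snd t.2).
Definition word (Omega : finType) (t : walk Omega) : seq {set Omega} :=
  map fst t.2.

Definition is_walk (R : realFieldType) (Omega : finType) (F : {set {set Omega}})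
    (rho : {set Omega} -> Omega -> Omega -> R) (t : walk Omega) : Prop :=
  forall i, (i < size t.2)%N ->
    [/\ (step t i).1 \in F, state t i \in (step t i).1
      & 0 < rho (step t i).1 (state t i) (step t i).2].

Definition p_walk (R : realFieldType) (Omega : finType)
    (rho : {set Omega} -> Omega -> Omega -> R) (omega_init : Omega -> R)
    (t : walk Omega) : R :=
  omega_init t.1 * \prod_(i < size t.2) rho (step t i).1 (state t i) (step t i).2.

Definition is_strategy (Omega : finType) (F : {set {set Omega}})
    (S : walk Omega -> {set Omega}) : Prop :=
  forall t, [exists f in F, wlast t \in f] -> S t \in F /\ wlast t \in S t.

Definition follows (Omega : finType) (S : walk Omega -> {set Omega}) (t : walk Omega) : Prop :=
  forall i, (i < size t.2)%N -> S (t.1, take i t.2) = (step t i).1.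

Definition proper_prefix (Omega : finType) (t t' : walk Omega) : Prop :=
  [/\ t.1 = t'.1, prefix t.2 t'.2 & t.2 <> t'.2].

(* valid set of walks (X is a predicate on walks, possibly infinite) *)
Definition valid (R : realFieldType) (Omega : finType) (F : {set {set Omega}})
    (rho : {set Omega} -> Omega -> Omega -> R) (X : walk Omega -> Prop) : Prop :=
  exists S, [/\ is_strategy F S,
    (forall t, X t -> is_walk F rho t /\ follows S t)
  & (forall t t', X t -> X t' -> ~ proper_prefix t t')].

Definition gamma_init (R : realFieldType) (Omega : finType) (omega omega_init : Omega -> R) : R :=
  \big[Num.max/0]_(s : Omega) (omega_init s / omega s).

Definition lambda_word (R : realFieldType) (Omega : finType)
    (lambda : {set Omega} -> R) (W : seq {set Omega}) : R :=
  \prod_(f <- W) lambda f.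

(* Main.v *)
Require Import Defs.
From HB Require Import structures.
From mathcomp Require Import all_boot all_order all_algebra.
From mathcomp Require Import ring.
Import Order.TTheory GRing.Theory Num.Theory.
Set Implicit Arguments. Unset Strict Implicit. Unset Printing Implicit Defensive.
Local Open Scope ring_scope.

Fixpoint prodw (R : realFieldType) (Omega : finType)
  (rho : {set Omega} -> Omega -> Omega -> R) (x : Omega)
  (l : seq ({set Omega} * Omega)) : R :=
  match l with [::] => 1 | a :: l' => rho a.1 x a.2 * prodw rho a.2 l' end.

Fixpoint iw (R : realFieldType) (Omega : finType) (F : {set {set Omega}})
  (rho : {set Omega} -> Omega -> Omega -> R) (x : Omega)
  (l : seq ({set Omega} * Omega)) : Prop :=
  match l with [::] => True
  | a :: l' => [/\ a.1 \in F, x \in a.1, 0 < rho a.1 x a.2 & iw F rho a.2 l'] end.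

Lemma step_cons (Omega : finType) (x : Omega) a l i :
  (i < size l)%N -> step (x, a :: l) i.+1 = step (a.2, l) i.
Proof. by move=> hi; rewrite /step /= (set_nth_default (set0, a.2)). Qed.

Lemma state_cons (Omega : finType) (x : Omega) a l i :
  (i <= size l)%N -> state (x, a :: l) i.+1 = state (a.2, l) i.
Proof.
by move=> hi; rewrite /state /= (set_nth_default a.2) //= size_map ltnS.
Qed.

Lemma is_walkE (R : realFieldType) (Omega : finType) (F : {set {set Omega}})
  (rho : {set Omega} -> Omega -> Omega -> R) x l :
  is_walk F rho (x, l) <-> iw F rho x l.
Proof.
elim: l x => [|a l IH] x /=; first by split.
split.
- move=> h; have [h1 h2 h3] := h 0%N isT.
  split => //; apply/IH => i hi.
  have := h i.+1 hi; rewrite step_cons // state_cons //; exact: ltnW.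
- move=> [h1 h2 h3 /IH h4] [|i] /= hi; first by split.
  rewrite step_cons // state_cons //; [exact: h4 | exact: ltnW].
Qed.

Lemma prodE (R : realFieldType) (Omega : finType)
  (rho : {set Omega} -> Omega -> Omega -> R) x l :
  \prod_(i < size l) rho (step (x,l) i).1 (state (x,l) i) (step (x,l) i).2
  = prodw rho x l.
Proof.
elim: l x => [|a l IH] x /=; first by rewrite big_ord0.
rewrite big_ord_recl -(IH a.2); congr (_ * _).
apply: eq_bigr => i _; rewrite lift0 step_cons // state_cons //.
exact: ltnW.
Qed.

Lemma p_walkE (R : realFieldType) (Omega : finType)
  (rho : {set Omega} -> Omega -> Omega -> R) w (t : walk Omega) :
  p_walk rho w t = w t.1 * prodw rho t.1 t.2.
Proof. by case: t => x l; rewrite /p_walk prodE. Qed.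

Lemma iw_cat (R : realFieldType) (Omega : finType) (F : {set {set Omega}})
  (rho : {set Omega} -> Omega -> Omega -> R) x l1 l2 :
  iw F rho x (l1 ++ l2) <-> iw F rho x l1 /\ iw F rho (last x (map snd l1)) l2.
Proof.
elim: l1 x => [|a l IH] x /=; first by split => // -[].
split.
- by move=> [h1 h2 h3 /IH [h4 h5]].
- by move=> [[h1 h2 h3 h4] h5]; split => //; apply/IH.
Qed.

Lemma prodw_cat (R : realFieldType) (Omega : finType)
  (rho : {set Omega} -> Omega -> Omega -> R) x l1 l2 :
  prodw rho x (l1 ++ l2) = prodw rho x l1 * prodw rho (last x (map snd l1)) l2.
Proof.
by elim: l1 x => [|a l IH] x /=; rewrite ?mul1r // IH mulrA.
Qed.

Lemma prodw_ge0 (R : realFieldType) (Omega : finType) (F : {set {set Omega}})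
  (rho : {set Omega} -> Omega -> Omega -> R) x l :
  iw F rho x l -> 0 <= prodw rho x l.
Proof.
elim: l x => [|a l IH] x /=; first by [].
by move=> [_ _ h3 /IH h4]; rewrite mulr_ge0 // ltW.
Qed.

Lemma uniq_const (T : eqType) (s : seq T) a :
  uniq s -> (forall t, t \in s -> t = a) -> s = [::] \/ s = [:: a].
Proof.
case: s => [|b s] /=; first by left.
move=> /andP [hb hs] h; right.
have eb := h b (mem_head _ _); subst b.
case: s hb hs h => [|c s] //= hb _ h.
have ec : c = a by apply: h; rewrite !inE eqxx orbT.
subst c.
by rewrite inE eqxx in hb.
Qed.

Lemma sum_group (R : realFieldType) (T : eqType) (K : finType) (s : seq T)
  (key : T -> K) (g : T -> R) :
  \sum_(t <- s) g t = \sum_(k : K) \sum_(t <- s | key t == k) g t.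
Proof.
symmetry; rewrite (exchange_big_dep xpredT) //=.
apply: eq_bigr => t _.
by rewrite (big_pred1 (key t)) // => k; rewrite /= eq_sym.
Qed.

Lemma sum_group_seq (R : realFieldType) (T K : eqType) (s : seq T)
  (key : T -> K) (g : T -> R) :
  \sum_(t <- s) g t = \sum_(k <- undup (map key s)) \sum_(t <- s | key t == k) g t.
Proof.
symmetry; rewrite (exchange_big_dep xpredT) //=.
rewrite big_seq_cond [RHS]big_seq_cond; apply: eq_bigr => t /andP [ht _].
rewrite -big_filter.
have -> : [seq k <- undup [seq key i | i <- s] | key t == k] = [:: key t].
  rewrite -(@filter_pred1_uniq _ (undup [seq key i | i <- s]) (key t)).
  - by apply: eq_filter => k; rewrite /= eq_sym.
  - exact: undup_uniq.
  - by rewrite mem_undup map_f.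
by rewrite big_seq1.
Qed.

Definition trunc (Omega : finType) (v : walk Omega) : walk Omega :=
  (v.1, take (size v.2).-1 v.2).

Lemma word_rcons (Omega : finType) (v : walk Omega) W' f sg :
  word v = rcons W' f -> wlast v = sg ->
  v.2 = rcons (trunc v).2 (f, sg) /\ map fst (trunc v).2 = W'.
Proof.
case: v => x l /=; rewrite /word /wlast /trunc /=.
case/lastP: l => [|l a]; first by case: W'.
rewrite map_rcons => /rcons_inj [hW ha].
rewrite map_rcons last_rcons => hs.
rewrite size_rcons /= -cats1 take_size_cat //.
by case: a ha hs => a1 a2 /= ha hs; subst; rewrite cats1.
Qed.

Lemma lambda_word_ge0 (R : realFieldType) (Omega : finType) (F : {set {set Omega}})
    (rho : {set Omega} -> Omega -> Omega -> R)
    (omega : Omega -> R) (lambda : {set Omega} -> R)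
    (hF : forall f, f \in F -> f != set0)
    (hrho0 : forall f s s', f \in F -> s \in f -> 0 <= rho f s s')
    (homega_pos : forall s, 0 < omega s)
    (hlambda : forall f s', f \in F ->
       \sum_(s in f | 0 < rho f s s') rho f s s' * (omega s / omega s') <= lambda f)
    W : all (mem F) W -> 0 <= lambda_word lambda W.
Proof.
move=> hW; rewrite /lambda_word big_seq; apply: prodr_ge0 => f hf.
have hfF : f \in F by move/allP: hW => /(_ f hf).
have /set0Pn [s hs] := hF f hfF.
apply: le_trans (hlambda f s hfF).
apply: sumr_ge0 => s0 /andP [hs0 hr].
by rewrite mulr_ge0 ?ltW // divr_gt0.
Qed.

Lemma lemB (R : realFieldType) (Omega : finType) (F : {set {set Omega}})
    (rho : {set Omega} -> Omega -> Omega -> R)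
    (omega : Omega -> R) (lambda : {set Omega} -> R)
    (hF : forall f, f \in F -> f != set0)
    (hrho0 : forall f s s', f \in F -> s \in f -> 0 <= rho f s s')
    (homega_pos : forall s, 0 < omega s)
    (hlambda : forall f s', f \in F ->
       \sum_(s in f | 0 < rho f s s') rho f s s' * (omega s / omega s') <= lambda f)
    W : all (mem F) W ->
  forall V : seq (walk Omega), uniq V ->
    (forall v, v \in V -> iw F rho v.1 v.2 /\ word v = W) ->
  forall sg, \sum_(v <- V | wlast v == sg) omega v.1 * prodw rho v.1 v.2
     <= lambda_word lambda W * omega sg.
Proof.
elim/last_ind: W => [|W' f IH] hW V hV hVW sg.
  rewrite /lambda_word big_nil mul1r -big_filter.
  have hc : forall t, t \in [seq v <- V | wlast v == sg] -> t = (sg, [::]).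
    case=> x l; rewrite mem_filter => /andP [/eqP hl /hVW [_ hw]].
    by case: l hl hw => [|a l] //= <-.
  have [->|->] := uniq_const (filter_uniq _ hV) hc.
  - by rewrite big_nil ltW.
  - by rewrite big_seq1 /= mulr1.
have hW' : all (mem F) W' by move: hW; rewrite all_rcons => /andP [].
have hfF : f \in F by move: hW; rewrite all_rcons => /andP [].
rewrite -big_filter.
set V1 := [seq v <- V | wlast v == sg].
have hV1 : forall v, v \in V1 ->
   v = ((trunc v).1, rcons (trunc v).2 (f, sg)) /\ map fst (trunc v).2 = W'.
  move=> v; rewrite mem_filter => /andP [/eqP hl /hVW [_ hw]].
  have [h1 h2] := word_rcons hw hl.
  by split => //; case: v h1 {hl hw h2} => x l /= e; rewrite {1}e.
have hV1w : forall v, v \in V1 -> iw F rho v.1 v.2.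
  by move=> v; rewrite mem_filter => /andP [_ /hVW []].
have -> : \sum_(v <- V1) omega v.1 * prodw rho v.1 v.2 =
   \sum_(u <- map (@trunc _) V1) omega u.1 * prodw rho u.1 u.2 * rho f (wlast u) sg.
  rewrite big_map big_seq [RHS]big_seq; apply: eq_bigr => v hv.
  have [e _] := hV1 v hv.
  by rewrite [in LHS]e /= -cats1 prodw_cat /= mulr1 mulrA.
set V2 := map (@trunc _) V1.
have hV2 : forall u, u \in V2 -> [/\ iw F rho u.1 u.2, word u = W',
     wlast u \in f & 0 < rho f (wlast u) sg].
  move=> u /mapP [v hv ->].
  have [e hm] := hV1 v hv.
  have := hV1w v hv; rewrite [in X in X -> _]e /= -cats1 => /iw_cat [h1 /= [_ h2 h3 _]].
  by split.
have uV2 : uniq V2.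
  rewrite map_inj_in_uniq ?filter_uniq // => v w hv hw he.
  by rewrite (proj1 (hV1 v hv)) (proj1 (hV1 w hw)) he.
rewrite (sum_group _ (@wlast _)).
apply: le_trans (_ : \sum_(s : Omega) (if (s \in f) && (0 < rho f s sg)
     then rho f s sg * (lambda_word lambda W' * omega s) else 0) <= _).
  apply: ler_sum => s _.
  have -> : \sum_(u <- V2 | wlast u == s) omega u.1 * prodw rho u.1 u.2 * rho f (wlast u) sg
       = rho f s sg * \sum_(u <- V2 | wlast u == s) omega u.1 * prodw rho u.1 u.2.
    rewrite big_distrr /=; apply: eq_bigr => u /eqP ->; exact: mulrC.
  case: ifP => [/andP [hs hr]|hc].
    rewrite ler_pM2l //; apply: IH => // u hu.
    by have [] := hV2 u hu.
  rewrite big1_seq ?mulr0 // => u /andP [/eqP hus hu].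
  have [_ _ h1 h2] := hV2 u hu.
  by move: hc; rewrite -hus h1 h2.
rewrite -big_mkcond /=.
have hlw := lambda_word_ge0 hF hrho0 homega_pos hlambda hW'.
have hos := homega_pos sg.
have -> : \sum_(s in f | 0 < rho f s sg) rho f s sg * (lambda_word lambda W' * omega s)
   = (lambda_word lambda W' * omega sg) *
     \sum_(s in f | 0 < rho f s sg) rho f s sg * (omega s / omega sg).
  rewrite big_distrr /=; apply: eq_bigr => s _.
  by field; rewrite gt_eqF.
rewrite /lambda_word big_rcons /= -/(lambda_word lambda W').
rewrite -[_ * lambda f * _]mulrA [lambda f * _]mulrC mulrA; apply: ler_wpM2l; [by rewrite mulr_ge0 // ltW | exact: hlambda].
Qed.

Lemma take_size_le (T : Type) (l1 s : seq T) :
  take (size l1) s = l1 -> (size l1 <= size s)%N.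
Proof.
by move=> e; rewrite -{1}e size_take; case: ifP => // /ltnW.
Qed.

Lemma lemA_has (R : realFieldType) (Omega : finType)
    (rho : {set Omega} -> Omega -> Omega -> R)
    (P : walk Omega -> Prop) (S : walk Omega -> {set Omega})
    (hpf : forall t t', P t -> P t' -> ~ proper_prefix t t') x l1
    (Z : seq (walk Omega)) : uniq Z ->
  (forall t, t \in Z -> [/\ P t, t.1 = x & take (size l1) t.2 = l1]) ->
  forall t0, t0 \in Z -> size t0.2 = size l1 ->
  \sum_(t <- Z) prodw rho (last x (map snd l1)) (drop (size l1) t.2) <= 1.
Proof.
move=> hZ hZt t0 ht0 hs0.
have [hP0 h01 h02] := hZt t0 ht0.
have e0 : t0 = (x, l1).
  by case: t0 ht0 hs0 hP0 h01 h02 => y l /= _ hs _ -> <-; rewrite -hs take_size.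
have hall : forall t, t \in Z -> t = t0.
  move=> t ht; have [hP h1 h2] := hZt t ht.
  apply/eqP; apply/negPn/negP => hne; apply: (hpf t0 t hP0 hP).
  rewrite e0; split => //.
  - by rewrite prefixE h2.
  - move=> /= el; move: hne; rewrite e0 el -h1.
    by case: t {ht hP h1 h2 el} => a b /=; rewrite eqxx.
have [eZ|eZ] := uniq_const hZ hall; first by rewrite eZ in ht0.
by rewrite eZ big_seq1 e0 /= drop_size.
Qed.

Lemma lemA (R : realFieldType) (Omega : finType) (F : {set {set Omega}})
    (rho : {set Omega} -> Omega -> Omega -> R)
    (hrho0 : forall f s s', f \in F -> s \in f -> 0 <= rho f s s')
    (hrho1 : forall f s, f \in F -> s \in f -> \sum_(s' : Omega) rho f s s' = 1)
    (P : walk Omega -> Prop) (S : walk Omega -> {set Omega})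
    (hP : forall t, P t -> iw F rho t.1 t.2 /\ follows S t)
    (hpf : forall t t', P t -> P t' -> ~ proper_prefix t t') :
  forall N x l1 (Z : seq (walk Omega)), uniq Z ->
  (forall t, t \in Z -> [/\ P t, t.1 = x, take (size l1) t.2 = l1
                          & (size t.2 <= size l1 + N)%N]) ->
  \sum_(t <- Z) prodw rho (last x (map snd l1)) (drop (size l1) t.2) <= 1.
Proof.
move=> N; elim: N => [|N IH] x l1 Z hZ hZt.
all: have [/hasP [t0 ht0 /eqP hs0]|hno] := boolP (has (fun t => size t.2 == size l1) Z).
- have hs1 : size t0.2 = size l1 by [].
  apply: (@lemA_has R Omega rho P S hpf x l1 Z hZ _ t0 ht0 hs1) => t /hZt [] //.
- rewrite big_seq big1 ?ler01 // => t ht.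
  have [_ _ ht1 ht2] := hZt t ht.
  have h := take_size_le ht1; rewrite addn0 in ht2.
  have : size t.2 == size l1 by rewrite eqn_leq ht2 h.
  by move=> e; move/hasP: hno; case; exists t.
- have hs1 : size t0.2 = size l1 by [].
  apply: (@lemA_has R Omega rho P S hpf x l1 Z hZ _ t0 ht0 hs1) => t /hZt [] //.
- case: Z hZ hZt hno => [|t0 Z'] hZ hZt hno; first by rewrite big_nil ler01.
  set n := size l1; set e := last x (map snd l1); set f := S (x, l1).
  have hgt : forall t, t \in t0 :: Z' -> (n < size t.2)%N.
    move=> t ht; have [_ _ h1 _] := hZt t ht.
    rewrite ltn_neqAle take_size_le // andbT eq_sym.
    by apply/negP => he; move/hasP: hno; apply; exists t.
  have hdrop : forall t, t \in t0 :: Z' ->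
      drop n t.2 = (f, (step t n).2) :: drop n.+1 t.2.
    move=> t ht; have [hPt h1 h2 _] := hZt t ht.
    rewrite (drop_nth (set0, t.1)) ?hgt //.
    have [_ hf] := hP t hPt.
    have := hf n (hgt t ht); rewrite h2 h1 -/f => ->.
    by rewrite /step h1; case: (nth _ _ _).
  have hcat : forall t, t \in t0 :: Z' -> t.2 = l1 ++ drop n t.2.
    by move=> t ht; have [_ _ h2 _] := hZt t ht; rewrite -{1}h2 cat_take_drop.
  have [hf0 he0] : f \in F /\ e \in f.
    have ht0 := mem_head t0 Z'.
    have [hPt h1 _ _] := hZt t0 ht0.
    have [hw _] := hP t0 hPt.
    move: hw; rewrite (hcat t0 ht0) => /iw_cat [_].
    by rewrite h1 -/e (hdrop t0 ht0) /= => -[].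
  rewrite (sum_group _ (fun t => (step t n).2)).
  rewrite -(hrho1 f e hf0 he0); apply: ler_sum => y _.
  rewrite big_seq_cond.
  rewrite (eq_bigr (fun t => rho f e y * prodw rho y (drop n.+1 t.2))); last first.
    by move=> t /andP [ht /eqP hy]; rewrite (hdrop t ht) /= hy.
  rewrite -big_distrr /= -big_seq_cond -big_filter.
  rewrite -[X in _ <= X]mulr1 ler_wpM2l ?hrho0 //.
  have := IH x (rcons l1 (f, y)) [seq t <- t0 :: Z' | (step t n).2 == y].
  rewrite map_rcons last_rcons size_rcons; apply; first exact: filter_uniq.
  move=> t; rewrite mem_filter => /andP [/eqP hy ht].
  have [hPt h1 h2 h3] := hZt t ht.
  split => //; last by rewrite addSnnS.
  rewrite (take_nth (set0, t.1)) ?hgt // h2.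
  have := hdrop t ht; rewrite (drop_nth (set0, t.1)); last exact: hgt.
  by move/(congr1 (head (set0, x))) => /= ->; rewrite hy.
Qed.

Lemma le_bigmax0 (R : realFieldType) (I : eqType) (r : seq I) (G : I -> R) x :
  x \in r -> G x <= \big[Num.max/0]_(i <- r) G i.
Proof.
elim: r => [|a r IH] //; rewrite inE big_cons => /orP [/eqP ->|hx].
  by rewrite le_max lexx.
by rewrite le_max IH ?orbT.
Qed.

Lemma bigmax0_ge0 (R : realFieldType) (I : Type) (r : seq I) (G : I -> R) :
  0 <= \big[Num.max/0]_(i <- r) G i.
Proof.
by elim: r => [|a r IH]; rewrite ?big_nil // big_cons le_max IH orbT.
Qed.

Lemma leq_sum_mem (T : eqType) (s : seq T) (g : T -> nat) t :
  t \in s -> (g t <= \sum_(x <- s) g x)%N.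
Proof.
elim: s => [|a s IH] //; rewrite inE big_cons => /orP [/eqP ->|ht].
  exact: leq_addr.
exact: leq_trans (IH ht) (leq_addl _ _).
Qed.

Unset Implicit Arguments.

Theorem theorem6 (R : realFieldType) (Omega : finType) (F : {set {set Omega}})
    (rho : {set Omega} -> Omega -> Omega -> R)
    (omega omega_init : Omega -> R) (lambda : {set Omega} -> R)
    (hF : forall f, f \in F -> f != set0)
    (hrho0 : forall f s s', f \in F -> s \in f -> 0 <= rho f s s')
    (hrho1 : forall f s, f \in F -> s \in f -> \sum_(s' : Omega) rho f s s' = 1)
    (homega_pos : forall s, 0 < omega s)
    (homega1 : \sum_(s : Omega) omega s = 1)
    (hinit0 : forall s, 0 <= omega_init s)
    (hinit1 : \sum_(s : Omega) omega_init s = 1)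
    (hlambda : forall f s', f \in F ->
       \sum_(s in f | 0 < rho f s s') rho f s s' * (omega s / omega s') <= lambda f)
    (W : seq {set Omega}) (hW : all (mem F) W)
    (X : walk Omega -> Prop) (hX : valid F rho X)
    (hpre : forall t, X t -> prefix W (word t)) :
  forall s : seq (walk Omega), uniq s -> (forall t, t \in s -> X t) ->
    \sum_(t <- s) p_walk rho omega_init t
      <= gamma_init omega omega_init * lambda_word lambda W.
Proof.
move=> s hs hsX.
have [S [hstr hXw hpf]] := hX.
have hP : forall t, X t -> iw F rho t.1 t.2 /\ follows S t.
  move=> t /hXw [hw hf]; split => //; apply/is_walkE; by case: t hw {hf}.
set n := size W.
set g := gamma_init omega omega_init.
have hg0 : 0 <= g by exact: bigmax0_ge0.
have hinit : forall x, omega_init x <= g * omega x.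
  move=> x; rewrite -ler_pdivrMr //.
  exact: (le_bigmax0 (fun s => omega_init s / omega s) (mem_index_enum x)).
pose key (t : walk Omega) : walk Omega := (t.1, take n t.2).
have hkey : forall t, t \in s ->
   [/\ t.2 = (key t).2 ++ drop n t.2, size (key t).2 = n,
       iw F rho (key t).1 (key t).2 & word (key t) = W].
  move=> t ht; have hXt := hsX t ht.
  have := hpre t hXt; rewrite prefixE => /eqP hpt.
  have hn : (n <= size t.2)%N.
    by have := take_size_le hpt; rewrite size_map.
  have [hw _] := hP t hXt.
  move: hw; rewrite -{1}(cat_take_drop n t.2) => /iw_cat [hw1 _].
  split => //=; first by rewrite cat_take_drop.
  - exact: size_takel.
  - by rewrite /word /= map_take.
set U := undup (map key s).
have hU : forall u, u \in U -> iw F rho u.1 u.2 /\ word u = W.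
  by move=> u; rewrite mem_undup => /mapP [t ht ->]; have [] := hkey t ht.
have uU : uniq U by exact: undup_uniq.
apply: le_trans (_ : \sum_(u <- U) omega_init u.1 * prodw rho u.1 u.2 <= _).
  rewrite (sum_group_seq _ key) big_seq [X in _ <= X]big_seq.
  apply: ler_sum => u hu.
  rewrite big_seq_cond.
  rewrite (eq_bigr (fun t => omega_init u.1 * prodw rho u.1 u.2 *
        prodw rho (last u.1 (map snd u.2)) (drop (size u.2) t.2))); last first.
    move=> t /andP [ht /eqP hk].
    have [e1 e2 _ _] := hkey t ht.
    rewrite p_walkE e1 prodw_cat -hk /= e2 mulrA.
    by rewrite -e1.
  rewrite -big_distrr /= -big_seq_cond -big_filter.
  rewrite -[X in _ <= X]mulr1 ler_wpM2l //.
    by rewrite mulr_ge0 // (prodw_ge0 (proj1 (hU u hu))).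
  apply: (lemA hrho0 hrho1 hP hpf (N := \sum_(t <- s) size t.2)).
    exact: filter_uniq.
  move=> t; rewrite mem_filter => /andP [/eqP hk ht].
  have [e1 e2 _ _] := hkey t ht.
  split; [exact: hsX | by rewrite -hk | by rewrite -hk e2 | ].
  exact: leq_trans (leq_sum_mem (fun t => size t.2) ht) (leq_addl _ _).
apply: le_trans (_ : \sum_(u <- U) g * (omega u.1 * prodw rho u.1 u.2) <= _).
  rewrite big_seq [X in _ <= X]big_seq; apply: ler_sum => u hu.
  rewrite mulrA ler_wpM2r ?hinit //.
  exact: (prodw_ge0 (proj1 (hU u hu))).
rewrite -big_distrr /= ler_wpM2l // (sum_group _ (@wlast _)).
apply: le_trans (_ : \sum_(sg : Omega) lambda_word lambda W * omega sg <= _).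
  apply: ler_sum => sg _.
  exact: (lemB hF hrho0 homega_pos hlambda hW uU hU).
by rewrite -big_distrr /= homega1 mulr1.
Qed.
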